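(* Let $d\geq 1$, let $\mathscr{Y}=(\mathbb{P}^5)^d$ be the variety of $d$-tuples of conics in $\mathbb{P}^2$ (over $\mathbb{C}$), and let $h$ be a rational function on $\mathscr{Y}$. Suppose that for every $d$-tuple $(\mathcal{C}_1,\dots,\mathcal{C}_d)$ of conics in $\mathbb{P}^3$ and every two camera projections $\pi,\pi'$ for which both sides are defined, $h(\pi(\mathcal{C}_1),\dots,\pi(\mathcal{C}_d))=h(\pi'(\mathcal{C}_1),\dots,\pi'(\mathcal{C}_d))$. Then $h$ is constant. In other words, there is no nonconstant rational invariant of $d$ conics in $\mathbb{P}^3$ that can be computed from their perspective projection.
   Context: A conic in $\mathbb{P}^2$ is the zero set of a nonzero quadratic form in $3$ variables, up to scalar, so the conics in $\mathbb{P}^2$ are parametrized by $\mathbb{P}^5$. A conic in $\mathbb{P}^3$ is a nondegenerate conic contained in a plane of $\mathbb{P}^3$. A camera projection with center $\bar{o}\in\mathbb{P}^3$ is a map $\pi:\mathbb{P}^3\setminus\{\bar{o}\}\to\mathbb{P}^2$ induced by a rank-$3$ complex $3\times4$ matrix whose kernel is $\bar{o}$; the image $\pi(\mathcal{C})$ of a conic $\mathcal{C}$ whose plane does not contain $\bar{o}$ is a conic in $\mathbb{P}^2$. *)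

(* Defs.v *)
From HB Require Import structures.
From mathcomp Require Import all_boot all_order all_algebra.
From mathcomp Require Import mpoly.
From mathcomp Require Import complex.
From mathcomp Require Import reals.

Set Implicit Arguments.
Unset Strict Implicit.
Unset Printing Implicit Defensive.

Import Order.TTheory GRing.Theory Num.Theory.
Local Open Scope ring_scope.

Notation CC R := (complex (Real.sort R)).

Section Defs.
Variable F : fieldType.

(* Coordinates on P^5: a conic in P^2 given by the coefficient vector
   a = (a0,..,a5) of the quadratic form
   a0 x^2 + a1 y^2 + a2 z^2 + a3 xy + a4 xz + a5 yz. *)
Definition conic_eval (a : 'rV[F]_6) (w : 'cV[F]_3) : F :=
  a 0 0 * w 0 0 ^+ 2 + a 0 1 * w 1 0 ^+ 2 + a 0 2%:R * w 2%:R 0 ^+ 2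
  + a 0 3%:R * (w 0 0 * w 1 0) + a 0 4%:R * (w 0 0 * w 2%:R 0)
  + a 0 5%:R * (w 1 0 * w 2%:R 0).

Definition qform (B : 'M[F]_3) (u : 'cV[F]_3) : F := (u^T *m B *m u) 0 0.

(* A conic in P^3: the plane spanned by the columns of M (rank 3), and in
   plane coordinates u the nondegenerate conic u^T B u = 0 (B symmetric,
   invertible).  Its points are [M u] for u <> 0 with u^T B u = 0. *)
Definition conic3 (M : 'M[F]_(4,3)) (B : 'M[F]_3) : Prop :=
  \rank M = 3%N /\ B^T = B /\ \det B != 0.

Definition camera (P : 'M[F]_(3,4)) : Prop := \rank P = 3%N.

(* The plane of the conic (column span of M) does not contain the center of P. *)
Definition center_off_plane (P : 'M[F]_(3,4)) (M : 'M[F]_(4,3)) : Prop :=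
  forall u : 'cV[F]_3, M *m u != 0 -> P *m (M *m u) != 0.

(* a (a point of P^5) is the conic pi(C): its zero set in P^2 equals the
   image under P of the (affine cone over the) conic C = (M, B). *)
Definition is_image_conic (a : 'rV[F]_6) (P : 'M[F]_(3,4))
    (M : 'M[F]_(4,3)) (B : 'M[F]_3) : Prop :=
  a != 0 /\
  forall w : 'cV[F]_3,
    (w != 0 /\ conic_eval a w = 0) <->
    (exists u : 'cV[F]_3, u != 0 /\ qform B u = 0 /\ w = P *m (M *m u)).

(* Variables of the coordinate ring of (P^5)^d: variable (i,j) is the j-th
   homogeneous coordinate of the i-th factor. *)
Definition blockdeg (d : nat) (m : 'X_{1.. d * 6}) (i : 'I_d) : nat :=
  (\sum_(j < 6) m (mxvec_index i j))%N.

Definition multihomog (d : nat) (e : 'I_d -> nat) (p : {mpoly F[d * 6]}) : Prop :=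
  forall m, m \in msupp p -> forall i, blockdeg m i = e i.

(* A rational function on (P^5)^d, represented as p/q with q nonzero and
   p, q multihomogeneous of the same multidegree. *)
Definition rat_fun_repr (d : nat) (p q : {mpoly F[d * 6]}) : Prop :=
  q != 0 /\ exists e : 'I_d -> nat, multihomog e p /\ multihomog e q.

(* Evaluation at a d-tuple of conics Y (row i of Y = coordinates of the i-th conic). *)
Definition mevalY (d : nat) (p : {mpoly F[d * 6]}) (Y : 'M[F]_(d, 6)) : F :=
  p.@[fun k => mxvec Y 0 k].

End Defs.

(* Main.v *)
Require Import Defs.
From HB Require Import structures.
From mathcomp Require Import all_boot all_order all_algebra.
From mathcomp Require Import mpoly.
From mathcomp Require Import complex.
From mathcomp Require Import reals.
From mathcomp Require Import ring zify.
From Stdlib Require Import Classical.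

Set Implicit Arguments.
Unset Strict Implicit.
Unset Printing Implicit Defensive.
Import Order.TTheory GRing.Theory Num.Theory.
Local Open Scope ring_scope.

Lemma ord3P (i : 'I_3) : i = 0 \/ i = 1 \/ i = 2%:R.
Proof.
case: i => [[|[|[|m]]] Hm].
- by left; apply/val_inj.
- by right; left; apply/val_inj.
- by right; right; apply/val_inj.
- by [].
Qed.

Lemma ord6P (i : 'I_6) : i = 0 \/ i = 1 \/ i = 2%:R \/ i = 3%:R \/ i = 4%:R \/ i = 5%:R.
Proof.
case: i => [[|[|[|[|[|[|m]]]]]] Hm].
- by left; apply/val_inj.
- by right; left; apply/val_inj.
- by right; right; left; apply/val_inj.
- by right; right; right; left; apply/val_inj.
- by right; right; right; right; left; apply/val_inj.
- by right; right; right; right; right; apply/val_inj.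
- by [].
Qed.

Section Conic.
Variable T : comNzRingType.

Lemma mul3 (g : 'M[T]_3) (w : 'cV[T]_3) i :
  (g *m w) i 0 = g i 0 * w 0 0 + g i 1 * w 1 0 + g i 2%:R * w 2%:R 0.
Proof.
rewrite mxE !big_ord_recl big_ord0 addr0 addrA.
congr (_ * _ + _ * _ + _ * _); congr (_ _ _); by apply/val_inj.
Qed.

Definition ce (a : 'rV[T]_6) (x y z : T) : T :=
  a 0 0 * x ^+ 2 + a 0 1 * y ^+ 2 + a 0 2%:R * z ^+ 2
  + a 0 3%:R * (x * y) + a 0 4%:R * (x * z) + a 0 5%:R * (y * z).

Definition cev (a : 'rV[T]_6) (w : 'cV[T]_3) := ce a (w 0 0) (w 1 0) (w 2%:R 0).

Definition ctrans_f (a : 'rV[T]_6) (g : 'M[T]_3) (k : nat) : T :=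
  let c j := ce a (g 0 j) (g 1 j) (g 2%:R j) in
  let c2 j l := ce a (g 0 j + g 0 l) (g 1 j + g 1 l) (g 2%:R j + g 2%:R l) - c j - c l in
  match k with
  | 0 => c 0 | 1 => c 1 | 2 => c 2%:R | 3 => c2 0 1 | 4 => c2 0 2%:R | _ => c2 1 2%:R
  end.

Definition ctrans (a : 'rV[T]_6) (g : 'M[T]_3) : 'rV[T]_6 :=
  \row_(k < 6) ctrans_f a g k.

Lemma ctransK a g w : cev (ctrans a g) w = cev a (g *m w).
Proof.
rewrite /cev !mul3 /ce !mxE /ctrans_f /ce /=.
ring.
Qed.


Definition v3 (x y z : T) : 'cV[T]_3 := \col_(i < 3) nth 0 [:: x; y; z] i.

Lemma cev_v3 a x y z : cev a (v3 x y z) = ce a x y z.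
Proof. by rewrite /cev !mxE. Qed.

Lemma cev_ext a b : (forall w, cev a w = cev b w) -> a = b.
Proof.
move=> H; have Hc x y z : ce a x y z = ce b x y z by rewrite -!cev_v3 H.
apply/rowP => k.
have E0 (c : 'rV[T]_6) : c 0 0 = ce c 1 0 0 by rewrite /ce; ring.
have E1 (c : 'rV[T]_6) : c 0 1 = ce c 0 1 0 by rewrite /ce; ring.
have E2 (c : 'rV[T]_6) : c 0 2%:R = ce c 0 0 1 by rewrite /ce; ring.
have E3 (c : 'rV[T]_6) : c 0 3%:R = ce c 1 1 0 - ce c 1 0 0 - ce c 0 1 0 by rewrite /ce; ring.
have E4 (c : 'rV[T]_6) : c 0 4%:R = ce c 1 0 1 - ce c 1 0 0 - ce c 0 0 1 by rewrite /ce; ring.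
have E5 (c : 'rV[T]_6) : c 0 5%:R = ce c 0 1 1 - ce c 0 1 0 - ce c 0 0 1 by rewrite /ce; ring.
case: (ord6P k) => [->|[->|[->|[->|[->|->]]]]].
- by rewrite E0 (E0 b) Hc.
- by rewrite E1 (E1 b) Hc.
- by rewrite E2 (E2 b) Hc.
- by rewrite E3 (E3 b) !Hc.
- by rewrite E4 (E4 b) !Hc.
- by rewrite E5 (E5 b) !Hc.
Qed.

Lemma mulmx3 m n (A : 'M[T]_(m,3)) (B : 'M[T]_(3,n)) i j :
  (A *m B) i j = A i 0 * B 0 j + A i 1 * B 1 j + A i 2%:R * B 2%:R j.
Proof.
rewrite mxE !big_ord_recl big_ord0 addr0 addrA.
congr (_ * _ + _ * _ + _ * _); congr (_ _ _); by apply/val_inj.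
Qed.

Lemma ctrans_comp a g1 g2 : ctrans (ctrans a g1) g2 = ctrans a (g1 *m g2).
Proof. by apply: cev_ext => w; rewrite !ctransK mulmxA. Qed.

Lemma ctrans1 a : ctrans a 1%:M = a.
Proof. by apply: cev_ext => w; rewrite !ctransK mul1mx. Qed.

Definition S2 (a : 'rV[T]_6) : 'M[T]_3 :=
  \matrix_(i < 3, j < 3) nth 0 (nth [::] [:: [:: a 0 0 *+ 2; a 0 3%:R; a 0 4%:R];
     [:: a 0 3%:R; a 0 1 *+ 2; a 0 5%:R]; [:: a 0 4%:R; a 0 5%:R; a 0 2%:R *+ 2]] i) j.

Definition disc a := \det (S2 a).

Lemma S2_ctrans a g : S2 (ctrans a g) = g^T *m S2 a *m g.
Proof.
apply/matrixP => i j; rewrite !mulmx3 !mxE ?mulmx3 ?mxE /ctrans_f /ce /=.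
by case: (ord3P i) => [->|[->|->]]; case: (ord3P j) => [->|[->|->]] /=; ring.
Qed.

Lemma disc_ctrans a g : disc (ctrans a g) = \det g ^+ 2 * disc a.
Proof. rewrite /disc S2_ctrans !det_mulmx det_tr; ring. Qed.

Lemma S2_sym a : (S2 a)^T = S2 a.
Proof. by apply/matrixP => i j; rewrite !mxE; case: (ord3P i) => [->|[->|->]]; case: (ord3P j) => [->|[->|->]]. Qed.

Lemma S2_cev a w : ((w^T *m S2 a *m w) 0 0) = cev a w *+ 2.
Proof. rewrite !mulmx3 !mxE ?mulmx3 ?mxE /cev /ce /=. ring. Qed.

End Conic.

Section Ops.
Variable T : comNzRingType.
Variable d : nat.

Definition upd (Y : 'M[T]_(d,6)) (i : 'I_d) (r : 'rV[T]_6) : 'M[T]_(d,6) :=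
  \matrix_(j, k) if j == i then r 0 k else Y j k.

Lemma row_upd Y i r j : row j (upd Y i r) = if j == i then r else row j Y.
Proof. by apply/rowP => k; rewrite !mxE; case: (j == i); rewrite ?mxE. Qed.

Definition op := ('I_d * 'cV[T]_3 * 'cV[T]_3)%type.
Definition gop (o : op) : 'M[T]_3 := 1%:M + o.1.2 *m o.2^T.
Definition step (Y : 'M[T]_(d,6)) (o : op) := upd Y o.1.1 (ctrans (row o.1.1 Y) (gop o)).
Definition applyT Y (ops : seq op) := foldl step Y ops.
Definition prodgM (M : 'M[T]_3) j (ops : seq op) :=
  foldl (fun M o => if o.1.1 == j then M *m gop o else M) M ops.

Lemma row_applyT_gen ops : forall Y M j a, row j Y = ctrans a M ->
  row j (applyT Y ops) = ctrans a (prodgM M j ops).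
Proof.
elim: ops => [|o ops IH] Y M j a H //=.
apply: IH; rewrite /step row_upd eq_sym.
case: eqP => [Ej|//]; by rewrite Ej -ctrans_comp -H.
Qed.

Lemma row_applyT ops Y j : row j (applyT Y ops) = ctrans (row j Y) (prodgM 1%:M j ops).
Proof. by apply: row_applyT_gen; rewrite ctrans1. Qed.

End Ops.

Section Maps.
Variables (T T' : comNzRingType) (f : {rmorphism T -> T'}).

Lemma map_ctrans a g : map_mx f (ctrans a g) = ctrans (map_mx f a) (map_mx f g).
Proof.
apply/rowP => k; rewrite !mxE.
case: (ord6P k) => [->|[->|[->|[->|[->|->]]]]]; rewrite /ctrans_f /ce /= !mxE;
  rewrite ?(rmorphD, rmorphN, rmorphB, rmorphM); ring.
Qed.

Lemma map_S2 a : map_mx f (S2 a) = S2 (map_mx f a).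
Proof.
apply/matrixP => i j; rewrite !mxE.
by case: (ord3P i) => [->|[->|->]]; case: (ord3P j) => [->|[->|->]] /=;
  rewrite ?rmorphMn ?mxE.
Qed.

Lemma map_disc a : f (disc a) = disc (map_mx f a).
Proof. by rewrite /disc -map_S2 det_map_mx. Qed.

Variable d : nat.
Definition opmap (o : op T d) : op T' d := (o.1.1, map_mx f o.1.2, map_mx f o.2).

Lemma map_gop o : map_mx f (gop o) = gop (opmap o).
Proof. by rewrite /gop map_mxD map_mx1 map_mxM map_trmx. Qed.

Lemma map_applyT ops : forall Y, map_mx f (applyT Y ops) = applyT (map_mx f Y) (map opmap ops).
Proof.
elim: ops => [|o ops IH] Y //=.
rewrite IH; congr applyT.
apply/matrixP => j k; rewrite /step !mxE /=.
case: (j == o.1.1) => //.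
by have /rowP/(_ k) := map_ctrans (row o.1.1 Y) (gop o); rewrite !mxE map_row map_gop.
Qed.

End Maps.

Section Curves.
Variable C : numClosedFieldType.

Lemma poly_zero_all (f : {poly C}) : (forall s, f.[s] = 0) -> f = 0.
Proof.
move=> H; apply/eqP; apply/negPn/negP => nz.
have HA : all (root f) [seq (i%:R : C) | i <- iota 0 (size f)].
  by apply/allP => x /mapP [i _ ->]; rewrite /root H.
have HU : uniq [seq (i%:R : C) | i <- iota 0 (size f)].
  by rewrite map_inj_uniq ?iota_uniq // => i j /eqP; rewrite eqr_nat => /eqP.
by have := max_poly_roots nz HA HU; rewrite size_map size_iota ltnn.
Qed.

Lemma poly_zero_generic (f H : {poly C}) :
  H != 0 -> (forall s, H.[s] != 0 -> f.[s] = 0) -> f = 0.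
Proof.
move=> Hnz Hf.
have : f * H = 0.
  apply: poly_zero_all => s; rewrite hornerM.
  by case: (eqVneq H.[s] 0) => [->|/Hf ->]; rewrite ?mulr0 ?mul0r.
by move/eqP; rewrite mulf_eq0 (negbTE Hnz) orbF => /eqP.
Qed.

Lemma horner_mmap n (p : {mpoly C[n]}) (h : 'I_n -> {poly C}) s :
  (mmap (@polyC C) h p).[s] = p.@[fun k => (h k).[s]].
Proof.
rewrite mevalE /mmap -horner_evalE rmorph_sum /=.
apply: eq_bigr => m _; rewrite rmorphM /= /horner_eval hornerC /mmap1.
congr (_ * _); rewrite -horner_evalE rmorph_prod; apply: eq_bigr => i _.
by rewrite rmorphXn.
Qed.

Definition evP d (p : {mpoly C[d * 6]}) (W : 'M[{poly C}]_(d,6)) : {poly C} :=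
  mmap (@polyC C) (fun k => mxvec W 0 k) p.

Lemma evPE d p (W : 'M[{poly C}]_(d,6)) s :
  (evP p W).[s] = mevalY p (map_mx (horner_eval s) W).
Proof.
rewrite /evP horner_mmap /mevalY -map_mxvec; apply: meval_eq => k.
by rewrite mxE.
Qed.

End Curves.

Section Step.
Variable C : numClosedFieldType.

Lemma conic_eval_cev (a : 'rV[C]_6) w : conic_eval a w = cev a w.
Proof. by []. Qed.

Definition halfS2 (a : 'rV[C]_6) : 'M[C]_3 := (2%:R^-1) *: S2 a.

Lemma two_neq0 : (2%:R : C) != 0.
Proof. by rewrite pnatr_eq0. Qed.

Lemma qform_half a u : qform (halfS2 a) u = cev a u.
Proof.
rewrite /qform /halfS2 -scalemxAr -scalemxAl mxE S2_cev.
by field.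
Qed.

Lemma disc0 : disc (0 : 'rV[C]_6) = 0.
Proof.
rewrite /disc (_ : S2 0 = 0) ?det0 //.
by apply/matrixP => i j; rewrite !mxE; case: (ord3P i) => [->|[->|->]]; case: (ord3P j) => [->|[->|->]]; rewrite /= ?mxE ?mul0rn.
Qed.

Lemma disc_neq0_nz (a : 'rV[C]_6) : disc a != 0 -> a != 0.
Proof. by apply: contraNneq => ->; rewrite disc0. Qed.

Lemma IMG (a : 'rV[C]_6) (H : 'M[C]_3) (P : 'M[C]_(3,4)) (M : 'M[C]_(4,3)) (B : 'M[C]_3) :
  H \in unitmx -> disc a != 0 -> P *m M = H -> (forall u, qform B u = cev a u) ->
  is_image_conic (ctrans a (invmx H)) P M B.
Proof.
move=> Hu Hd HPM HB; split.
  apply: disc_neq0_nz; rewrite disc_ctrans det_inv mulf_neq0 // expf_neq0 //.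
  by rewrite invr_eq0 -unitfE -unitmxE.
move=> w; rewrite conic_eval_cev ctransK; split.
  move=> [wnz hw]; exists (invmx H *m w); split; last split.
  - apply: contraNneq wnz => h0; by rewrite -(mulKVmx Hu w) h0 mulmx0.
  - by rewrite HB.
  - by rewrite mulmxA HPM mulKVmx.
move=> [u [unz [hu ->]]]; rewrite mulmxA HPM mulKmx // -HB hu; split => //.
apply: contraNneq unz => h0; by rewrite -(mulKmx Hu u) h0 mulmx0.
Qed.

End Step.

Section StepLemma.
Variables (C : numClosedFieldType) (d : nat) (p q : {mpoly C[d * 6]}).

Definition Hyp : Prop :=
  forall (Ms : 'I_d -> 'M[C]_(4,3)) (Bs : 'I_d -> 'M[C]_3)
          (P P' : 'M[C]_(3,4)) (Y Y' : 'M[C]_(d, 6)),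
      (forall i, conic3 (Ms i) (Bs i)) ->
      camera P -> camera P' ->
      (forall i, center_off_plane P (Ms i)) ->
      (forall i, center_off_plane P' (Ms i)) ->
      (forall i, is_image_conic (row i Y) P (Ms i) (Bs i)) ->
      (forall i, is_image_conic (row i Y') P' (Ms i) (Bs i)) ->
      mevalY q Y != 0 -> mevalY q Y' != 0 ->
      mevalY p Y / mevalY q Y = mevalY p Y' / mevalY q Y'.

Lemma step_ok : Hyp -> forall (Y : 'M[C]_(d,6)) (o : op C d),
  (forall i, disc (row i Y) != 0) -> gop o \in unitmx ->
  mevalY q Y != 0 -> mevalY q (step Y o) != 0 ->
  mevalY p Y / mevalY q Y = mevalY p (step Y o) / mevalY q (step Y o).
Proof.
move=> Hh Y o hd gU qY qY'.
set i := o.1.1; set u := o.1.2; set v := o.2; set g := gop o; set G := invmx g.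
have GU : G \in unitmx by rewrite unitmx_inv.
pose Ms j : 'M[C]_(3 + 1,3) := col_mx (1%:M : 'M_3) (if j == i then v^T else 0).
pose P : 'M[C]_(3,3 + 1) := row_mx (1%:M : 'M_3) 0.
pose P' : 'M[C]_(3,3 + 1) := row_mx (1%:M : 'M_3) (- (G *m u)).
pose Bs j := halfS2 (row j Y).
have PM j : P *m Ms j = 1%:M by rewrite /P /Ms mul_row_col mul1mx mul0mx addr0.
have PM' j : P' *m Ms j = if j == i then G else 1%:M.
  rewrite /P' /Ms mul_row_col mul1mx; case: (j == i); last by rewrite mulmx0 addr0.
  rewrite mulNmx -mulmxA -{1}(mulVmx gU) /g /gop mulmxDr mulmx1 addrK //.
have rM j : \rank (Ms j) = 3%N.
  apply/eqP; rewrite eqn_leq rank_leq_col /=.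
  by rewrite -{1}(mxrank1 C 3) -(PM j) mxrankM_maxr.
apply: (Hh Ms Bs P P').
- move=> j; split; first exact: rM.
  split.
    apply/matrixP => a b; rewrite /Bs /halfS2 !mxE.
    by have /matrixP/(_ a b) := S2_sym (row j Y); rewrite !mxE => ->.
  rewrite /Bs /halfS2 detZ; apply: mulf_neq0; last exact: hd j.
  by rewrite expf_neq0 // invr_eq0 two_neq0.
- apply/eqP; rewrite eqn_leq rank_leq_row /=.
  by rewrite -{1}(mxrank1 C 3) -(PM i) mxrankM_maxl.
- apply/eqP; rewrite eqn_leq rank_leq_row /=.
  have := PM' i; rewrite eqxx => PMi.
  by rewrite -{1}(mxrank_unit GU) -PMi mxrankM_maxl.
- move=> j w Hw; rewrite mulmxA PM mul1mx; apply: contraNneq Hw => ->.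
  by rewrite mulmx0.
- move=> j w Hw; rewrite mulmxA PM'; case: (j == i); last first.
    by rewrite mul1mx; apply: contraNneq Hw => ->; rewrite mulmx0.
  apply: contraNneq Hw => h; have -> : w = 0 by rewrite -[w](mulKmx GU) h mulmx0.
  by rewrite mulmx0.
- move=> j; have := IMG (@unitmx1 C 3) (hd j) (PM j) (qform_half (row j Y)).
  by rewrite invmx1 ctrans1.
- move=> j; rewrite /step row_upd -/i.
  case: eqP => [->|/eqP/negbTE ji].
    have := PM' i; rewrite eqxx => PMi.
    have := IMG GU (hd i) PMi (qform_half (row i Y)).
    by rewrite /G invmxK.
  have := PM' j; rewrite ji => PMj.
  have := IMG (@unitmx1 C 3) (hd j) PMj (qform_half (row j Y)).
  by rewrite invmx1 ctrans1.
- exact: qY.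
- exact: qY'.
Qed.

End StepLemma.

Section Chain.
Variables (C : numClosedFieldType) (d : nat) (p q : {mpoly C[d * 6]}).
Hypothesis Hh : Hyp p q.

Definition Rel (A B : 'M[C]_(d,6)) :=
  mevalY p A * mevalY q B = mevalY p B * mevalY q A.

Definition liftop (o : op C d) : op {poly C} d :=
  (o.1.1, 'X *: map_mx (@polyC C) o.1.2, map_mx (@polyC C) o.2).
Definition interp (s : C) (o : op C d) : op C d := (o.1.1, s *: o.1.2, o.2).

Lemma map_hornerC s m n (A : 'M[C]_(m,n)) :
  map_mx (horner_eval s) (map_mx (@polyC C) A) = A.
Proof. by apply/matrixP => i j; rewrite !mxE /horner_eval hornerC. Qed.

Lemma opmap_lift s o : opmap (horner_eval s) (liftop o) = interp s o.
Proof.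
rewrite /opmap /liftop /interp /= map_mxZ !map_hornerC.
by congr (_,_,_); congr (_ *: _); apply: hornerX.
Qed.

Lemma W_eval s ops (Y : 'M[C]_(d,6)) :
  map_mx (horner_eval s) (applyT (map_mx (@polyC C) Y) (map liftop ops))
  = applyT Y (map (interp s) ops).
Proof.
rewrite map_applyT map_hornerC -map_comp; congr applyT.
by apply: eq_map => o /=; rewrite opmap_lift.
Qed.

Lemma gop_interp0 o : gop (interp 0 o) = 1%:M.
Proof. by rewrite /gop /= scale0r mul0mx addr0. Qed.

Lemma applyT_interp0 ops (Y : 'M[C]_(d,6)) : applyT Y (map (interp 0) ops) = Y.
Proof.
elim: ops Y => [|o ops IH] Y //=.
rewrite (_ : step Y (interp 0 o) = Y) ?IH //.
apply/matrixP => j k; rewrite /step gop_interp0 ctrans1 !mxE.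
by case: eqP => [->|]; rewrite ?mxE.
Qed.

Lemma map_interp1 ops : map (interp 1) ops = ops.
Proof.
elim: ops => [|[[i u] v] ops IH] //=.
by rewrite IH /interp /= scale1r.
Qed.

Lemma prodgM_unit (ops : seq (op C d)) : forall M j, M \in unitmx ->
  all (fun o => gop o \in unitmx) ops -> prodgM M j ops \in unitmx.
Proof.
elim: ops => [|o ops IH] M j MU //= /andP [oU aU].
apply: IH => //; case: (o.1.1 == j) => //.
by rewrite unitmx_mul MU oU.
Qed.

Lemma disc_applyT ops (Y : 'M[C]_(d,6)) :
  all (fun o => gop o \in unitmx) ops -> (forall i, disc (row i Y) != 0) ->
  forall j, disc (row j (applyT Y ops)) != 0.
Proof.
move=> aU hd j; rewrite row_applyT disc_ctrans mulf_neq0 // expf_neq0 //.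
by rewrite -unitfE -unitmxE prodgM_unit ?unitmx1.
Qed.

Definition Dpoly (ops : seq (op C d)) : {poly C} :=
  \prod_(o <- ops) \det (gop (liftop o)).

Lemma DpolyE ops s : (Dpoly ops).[s] = \prod_(o <- ops) \det (gop (interp s o)).
Proof.
rewrite /Dpoly -horner_evalE rmorph_prod; apply: eq_bigr => o _.
by rewrite -det_map_mx map_gop opmap_lift.
Qed.

Lemma chain_n n : forall ops, size ops = n -> forall (Y : 'M[C]_(d,6)), (forall i, disc (row i Y) != 0) ->
  mevalY q Y != 0 -> Rel Y (applyT Y ops).
Proof.
elim: n => [|n IH] ops.
  by case: ops => // _ Y hd qY; rewrite /Rel /= mulrC.
case/lastP: ops => [//|ops o]; rewrite size_rcons => -[Hs] Y hd qY.
pose Yp := map_mx (@polyC C) Y.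
pose Zp := applyT Yp (map liftop ops).
pose Wp := applyT Yp (map liftop (rcons ops o)).
pose H := evP q Zp * evP q Wp * Dpoly (rcons ops o).
pose F := (mevalY p Y)%:P * evP q Wp - evP p Wp * (mevalY q Y)%:P.
have ZE s : map_mx (horner_eval s) Zp = applyT Y (map (interp s) ops) by rewrite W_eval.
have WE s : map_mx (horner_eval s) Wp = applyT Y (map (interp s) (rcons ops o)) by rewrite W_eval.
have F0 : F = 0.
  apply: (@poly_zero_generic _ F H).
    apply/negP => /eqP H0; have := congr1 (fun P => P.[0]) H0.
    rewrite /= horner0 /H !hornerM !evPE ZE WE !applyT_interp0 DpolyE.
    rewrite big1 ?mulr1; last by move=> o' _; rewrite gop_interp0 det1.
    by move/eqP; rewrite mulf_eq0 orbb (negbTE qY).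
  move=> s; rewrite /H !hornerM !evPE ZE WE DpolyE.
  set Z := applyT Y (map (interp s) ops).
  have WZ : applyT Y (map (interp s) (rcons ops o)) = step Z (interp s o).
    by rewrite map_rcons /applyT foldl_rcons.
  rewrite WZ; rewrite !mulf_eq0 !negb_or => /andP [/andP [qZ qW] Dn].
  have aU : all (fun o => gop o \in unitmx) (map (interp s) (rcons ops o)).
    move: Dn; rewrite prodf_seq_neq0 all_map => /allP Hall.
    apply/allP => o' /Hall /=; rewrite unitmxE unitfE //.
  have hdZ : forall i, disc (row i Z) != 0.
    by apply: disc_applyT => //; move: aU; rewrite map_rcons all_rcons => /andP [].
  have oU : gop (interp s o) \in unitmx.
    by move: aU; rewrite map_rcons all_rcons => /andP [].
  have e1 := IH (map (interp s) ops) (etrans (size_map _ _) Hs) Y hd qY; rewrite -/Z /Rel in e1.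
  have e2 := step_ok Hh hdZ oU qZ qW.
  move/eqP: e2; rewrite eqr_div // => /eqP e2.
  rewrite /F !hornerE !evPE WE WZ -/Z.
  apply/eqP; rewrite subr_eq0; apply/eqP.
  apply: (mulIf qZ) => /=.
  transitivity ((mevalY p Y * mevalY q Z) * mevalY q (step Z (interp s o))); first by ring.
  rewrite e1.
  transitivity ((mevalY p Z * mevalY q (step Z (interp s o))) * mevalY q Y); first by ring.
  rewrite e2; ring.
have := congr1 (fun P => P.[1]) F0.
rewrite /F /= horner0 !hornerE !evPE WE map_interp1 => /eqP; rewrite subr_eq0 => /eqP.
by rewrite /Rel.
Qed.

Lemma chain ops (Y : 'M[C]_(d,6)) : (forall i, disc (row i Y) != 0) ->
  mevalY q Y != 0 -> Rel Y (applyT Y ops).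
Proof. exact: (chain_n (erefl (size ops))). Qed.

End Chain.

Lemma digits_aux (N a0 b0 A B : nat) : (a0 < N)%N -> (b0 < N)%N ->
  (a0 + N * A = b0 + N * B)%N -> a0 = b0 /\ A = B.
Proof.
move=> ha hb E.
have e0 : a0 = b0.
  have := congr1 (fun x => x %% N)%N E; rewrite /= ![(_ + N * _)%N]addnC !(mulnC N) !modnMDl.
  by rewrite !modn_small.
split => //; subst b0; move/addnI: E => /eqP; rewrite eqn_mul2l => /orP [/eqP N0|/eqP //].
by rewrite N0 in ha.
Qed.

Lemma digits_inj N n (a b : 'I_n -> nat) : (forall i, a i < N)%N -> (forall i, b i < N)%N ->
  (\sum_(i < n) a i * N ^ i = \sum_(i < n) b i * N ^ i)%N -> a =1 b.
Proof.
elim: n a b => [|n IH] a b ha hb E i; first by case: i.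
move: E; rewrite !big_ord_recl /= !expn0 !muln1.
have R (c : 'I_n.+1 -> nat) : (\sum_(i < n) c (lift ord0 i) * N ^ bump 0 i = N * \sum_(i < n) c (lift ord0 i) * N ^ i)%N.
  rewrite big_distrr /=; apply: eq_bigr => j _; rewrite /bump /= add1n expnS; ring.
rewrite !R => /digits_aux [] // E0 E1.
case: (unliftP ord0 i) => [j ->|->] //.
exact: (IH (fun j => a (lift ord0 j)) (fun j => b (lift ord0 j))).
Qed.

Section Kron.
Variable C : numClosedFieldType.

Lemma mpoly_zero n (f : {mpoly C[n]}) : (forall v, f.@[v] = 0) -> f = 0.
Proof.
move=> H; apply/eqP; apply/negPn/negP => fnz.
pose N := msize f.
have bnd m i : m \in msupp f -> (m i < N)%N.
  move=> /msize_mdeg_lt; apply: leq_ltn_trans.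
  by rewrite mdegE (bigD1 i) //= leq_addr.
pose kap (m : 'X_{1..n}) := (\sum_(i < n) m i * N ^ i)%N.
have kinj : {in msupp f &, injective kap}.
  move=> m m' hm hm' E; apply/mnmP.
  exact: (digits_inj (bnd m ^~ hm) (bnd m' ^~ hm') E).
pose Q : {poly C} := \sum_(m <- msupp f) f@_m *: 'X^(kap m).
have QE t : Q.[t] = f.@[fun i => t ^+ (N ^ i)].
  rewrite mevalE horner_sum; apply: eq_bigr => m _; rewrite hornerZ hornerXn.
  congr (_ * _).
  rewrite (eq_bigr (fun i : 'I_n => t ^+ (N ^ i * m i)%N)) => [|i _]; last by rewrite exprM.
  rewrite prodrXr; congr (_ ^+ _).
  by apply: eq_bigr => i _; rewrite mulnC.
have : msupp f != [::] by rewrite msupp_eq0.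
case Es: (msupp f) => [//|m0 s] _.
have m0in : m0 \in msupp f by rewrite Es mem_head.
have Qc : Q`_(kap m0) = f@_m0.
  rewrite /Q coef_sum (bigD1_seq m0) ?msupp_uniq //= coefZ coefXn eqxx mulr1.
  rewrite big1_seq ?addr0 // => m /andP [mm0 hm]; rewrite coefZ coefXn.
  case: eqP => [E|]; last by rewrite mulr0.
  by move: mm0; rewrite (kinj _ _ hm m0in (esym E)) eqxx.
have Qnz : Q != 0.
  apply/eqP => Q0; move: Qc; rewrite Q0 coef0 => /esym/eqP.
  by rewrite mcoeff_eq0 m0in.
apply/negP: Qnz; apply/negPn/eqP; apply: poly_zero_all => t.
by rewrite QE H.
Qed.

End Kron.

Section Reach.
Variable C : numClosedFieldType.
Variable d : nat.

Definition erow : 'rV[C]_6 := \row_(k < 6) nth 0 [:: 1; 1; 1; 0; 0; 0] k.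

Lemma cev_erow w : cev erow w = w 0 0 ^+ 2 + w 1 0 ^+ 2 + w 2%:R 0 ^+ 2.
Proof. rewrite /cev /ce !mxE /=. ring. Qed.

Section Row.
Variable a : 'rV[C]_6.
Definition al := a 0 3%:R / (2 * a 0 0).
Definition be := a 0 4%:R / (2 * a 0 0).
Definition ep := a 0 1 - a 0 3%:R ^+ 2 / (4 * a 0 0).
Definition fp := a 0 5%:R / 2 - a 0 3%:R * a 0 4%:R / (4 * a 0 0).
Definition ga := fp / ep.
Definition kp := a 0 2%:R - a 0 4%:R ^+ 2 / (4 * a 0 0) - fp ^+ 2 / ep.

Hypothesis a0 : a 0 0 != 0.
Hypothesis e0 : ep != 0.

Lemma four_neq0 : (4%:R : C) != 0. Proof. by rewrite pnatr_eq0. Qed.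
Lemma two_neq0' : (2%:R : C) != 0. Proof. by rewrite pnatr_eq0. Qed.

Lemma e0' : a 0 1 * (4 * a 0 0) - a 0 3%:R ^+ 2 != 0.
Proof.
have -> : a 0 1 * (4 * a 0 0) - a 0 3%:R ^+ 2 = ep * (4 * a 0 0).
  by rewrite /ep; field; rewrite a0.
by rewrite mulf_neq0 // mulf_neq0 // four_neq0.
Qed.

Lemma DL x y z : ce a x y z = a 0 0 * (x + al * y + be * z) ^+ 2 + ep * (y + ga * z) ^+ 2 + kp * z ^+ 2.
Proof.
rewrite /al /be /ga /kp /fp /ce /ep.
by field; rewrite a0 e0'.
Qed.

Definition r0 := sqrtC (a 0 0).
Definition r1 := sqrtC ep.
Definition r2 := sqrtC kp.

Definition M3 (x00 x01 x02 x10 x11 x12 x20 x21 x22 : C) : 'M[C]_3 :=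
  \matrix_(i < 3, j < 3) nth 0 (nth [::] [:: [:: x00; x01; x02]; [:: x10; x11; x12]; [:: x20; x21; x22]] i) j.

Definition Hmat := M3 r0 (r0 * al) (r0 * be) 0 r1 (r1 * ga) 0 0 r2.

Lemma E_to_a : ctrans erow Hmat = a.
Proof.
apply: cev_ext => w; rewrite ctransK cev_erow !mulmx3 !mxE /=.
transitivity (r0 ^+ 2 * (w 0 0 + al * w 1 0 + be * w 2%:R 0) ^+ 2 +
   r1 ^+ 2 * (w 1 0 + ga * w 2%:R 0) ^+ 2 + r2 ^+ 2 * w 2%:R 0 ^+ 2); first by ring.
by rewrite /r0 /r1 /r2 !sqrtCK /cev DL.
Qed.

Hypothesis k0 : kp != 0.

Lemma r0_neq0 : r0 != 0. Proof. by rewrite /r0 sqrtC_eq0. Qed.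
Lemma r1_neq0 : r1 != 0. Proof. by rewrite /r1 sqrtC_eq0. Qed.
Lemma r2_neq0 : r2 != 0. Proof. by rewrite /r2 sqrtC_eq0. Qed.

Definition Ginv := M3 (r0^-1) (- al / r1) ((al * ga - be) / r2) 0 (r1^-1) (- ga / r2) 0 0 (r2^-1).

Lemma a_to_E : ctrans a Ginv = erow.
Proof.
have h0 := r0_neq0; have h1 := r1_neq0; have h2 := r2_neq0.
apply: cev_ext => w; rewrite ctransK cev_erow /cev !mulmx3 !mxE /= DL.
transitivity (r0 ^+ 2 * (w 0 0 / r0) ^+ 2 + r1 ^+ 2 * (w 1 0 / r1) ^+ 2
   + r2 ^+ 2 * (w 2%:R 0 / r2) ^+ 2).
  have s0 : r0 ^+ 2 = a 0 0 by rewrite /r0 sqrtCK.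
  have s1 : r1 ^+ 2 = ep by rewrite /r1 sqrtCK.
  have s2 : r2 ^+ 2 = kp by rewrite /r2 sqrtCK.
  rewrite s0 s1 s2; congr (_ * _ ^+ 2 + _ * _ ^+ 2 + _ * _ ^+ 2).
  all: by field; rewrite ?h0 ?h1 ?h2.
Qed.

Definition opsE (i : 'I_d) : seq (op C d) :=
  [:: (i, v3 (r0 - 1) 0 0, v3 1 0 0); (i, v3 0 (r1 - 1) 0, v3 0 1 0);
      (i, v3 0 0 (r2 - 1), v3 0 0 1); (i, v3 1 0 0, v3 0 al (be - al * ga));
      (i, v3 0 1 0, v3 0 0 ga)].

Definition ops0 (i : 'I_d) : seq (op C d) :=
  [:: (i, v3 0 1 0, v3 0 0 (- ga)); (i, v3 1 0 0, v3 0 (- al) (- (be - al * ga)));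
      (i, v3 (r0^-1 - 1) 0 0, v3 1 0 0); (i, v3 0 (r1^-1 - 1) 0, v3 0 1 0);
      (i, v3 0 0 (r2^-1 - 1), v3 0 0 1)].

Lemma gopE (o : op C d) x y : gop o x y = (x == y)%:R + o.1.2 x 0 * o.2 y 0.
Proof. by rewrite /gop !mxE big_ord1 !mxE. Qed.

Lemma prod_opsE i : prodgM 1%:M i (opsE i) = Hmat.
Proof.
rewrite /prodgM /= eqxx mul1mx.
apply/matrixP => x y; rewrite !mulmx3 !gopE /= !mxE.
case: (ord3P x) => [->|[->|->]]; case: (ord3P y) => [->|[->|->]] /=; ring.
Qed.

Lemma prod_ops0 i : prodgM 1%:M i (ops0 i) = Ginv.
Proof.
rewrite /prodgM /= eqxx mul1mx.
apply/matrixP => x y; rewrite !mulmx3 !gopE /= !mxE.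
case: (ord3P x) => [->|[->|->]]; case: (ord3P y) => [->|[->|->]] /=; ring.
Qed.
End Row.

Lemma prodgM_M (ops : seq (op C d)) : forall M j, prodgM M j ops = M *m prodgM 1%:M j ops.
Proof.
elim: ops => [|o ops IH] M j; first by rewrite /prodgM /= mulmx1.
have E N : prodgM N j (o :: ops) = prodgM (if o.1.1 == j then N *m gop o else N) j ops by [].
rewrite !E IH [in RHS]IH; case: (o.1.1 == j); by rewrite ?mul1mx ?mulmxA ?mul1mx.
Qed.

Lemma prodgM_other (ops : seq (op C d)) : forall M j,
  all (fun o => o.1.1 != j) ops -> prodgM M j ops = M.
Proof.
elim: ops => [|o ops IH] M j //= /andP [oj H].
by rewrite (negbTE oj); apply: IH.
Qed.

Lemma prodgM_cat (s1 s2 : seq (op C d)) M j :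
  prodgM M j (s1 ++ s2) = prodgM (prodgM M j s1) j s2.
Proof. exact: foldl_cat. Qed.

Lemma prodgM_flatten (B : 'I_d -> seq (op C d)) (HB : forall i, all (fun o => o.1.1 == i) (B i))
  (l : seq 'I_d) : uniq l -> forall M j,
  prodgM M j (flatten (map B l)) = if j \in l then prodgM M j (B j) else M.
Proof.
elim: l => [|k l IH] //= /andP [kl ul] M j.
rewrite prodgM_cat IH // in_cons.
case: (eqVneq j k) => [->|jk] /=; first by rewrite (negbTE kl).
rewrite (@prodgM_other (B k)) //.
by apply/allP => o /(allP (HB k)) /eqP ->; rewrite eq_sym.
Qed.

Definition nondeg2 (a : 'rV[C]_6) := (a 0 0 != 0) && (ep a != 0).
Definition nondeg3 (a : 'rV[C]_6) := [&& a 0 0 != 0, ep a != 0 & kp a != 0].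

Definition reach_ops (Y0 Y : 'M[C]_(d,6)) : seq (op C d) :=
  flatten (map (fun i => ops0 (row i Y0) i ++ opsE (row i Y) i) (enum 'I_d)).

Lemma reach (Y0 Y : 'M[C]_(d,6)) : (forall i, nondeg3 (row i Y0)) ->
  (forall i, nondeg2 (row i Y)) -> applyT Y0 (reach_ops Y0 Y) = Y.
Proof.
move=> H0 H; apply/row_matrixP => j.
have HB i : all (fun o : op C d => o.1.1 == i) (ops0 (row i Y0) i ++ opsE (row i Y) i).
  by rewrite /= !eqxx.
rewrite row_applyT /reach_ops (prodgM_flatten HB) ?enum_uniq // mem_enum.
rewrite prodgM_cat prodgM_M -ctrans_comp.
rewrite prod_ops0 prod_opsE.
have /and3P [h1 h2 h3] := H0 j; have /andP [h4 h5] := H j.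
by rewrite a_to_E // E_to_a.
Qed.

End Reach.

Section Final.
Variables (C : numClosedFieldType) (d : nat).

Definition Xv (i : 'I_d) (k : 'I_6) : {mpoly C[d * 6]} := 'X_(mxvec_index i k).
Definition rowvar (i : 'I_d) : 'rV[{mpoly C[d * 6]}]_6 := \row_k Xv i k.
Definition Dfun (a : 'rV[C]_6) : C := a 0 0 * (a 0 1 * (4 * a 0 0) - a 0 3%:R ^+ 2) * disc a.
Definition Dm : {mpoly C[d * 6]} :=
  \prod_(i < d) (Xv i 0 * (Xv i 1 * (4 * Xv i 0) - Xv i 3%:R ^+ 2) * disc (rowvar i)).

Lemma DmE (Y : 'M[C]_(d,6)) : mevalY Dm Y = \prod_(i < d) Dfun (row i Y).
Proof.
rewrite /mevalY /Dm rmorph_prod; apply: eq_bigr => i _.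
have Ev : map_mx (meval (fun k => mxvec Y 0 k)) (rowvar i) = row i Y.
  by apply/rowP => k; rewrite !mxE /Xv mevalXU mxvecE.
rewrite /Dfun !rmorphM rmorphB !rmorphM ?rmorphXn /= map_disc Ev.
rewrite /Xv !mevalXU !mxvecE !mxE rmorph_nat; ring.
Qed.

Lemma Dfun_nondeg2 (a : 'rV[C]_6) : Dfun a != 0 -> nondeg2 a.
Proof.
rewrite /Dfun !mulf_eq0 !negb_or => /andP [/andP [h0 h1] _].
rewrite /nondeg2 h0 /=; apply: contra h1 => /eqP e.
apply/eqP; rewrite /ep in e.
by move: e => /eqP; rewrite subr_eq => /eqP ->; field; rewrite h0.
Qed.

Lemma Dfun_disc (a : 'rV[C]_6) : Dfun a != 0 -> disc a != 0.
Proof. by rewrite /Dfun !mulf_eq0 !negb_or => /andP [_ ->]. Qed.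

Lemma Hmat_det0 (a : 'rV[C]_6) : kp a = 0 -> \det (Hmat a) = 0.
Proof.
move=> k0; rewrite -det_tr det_trig.
  rewrite !big_ord_recr /= !mxE /= /r2 k0 sqrtC0 ?mulr0 //.
apply/is_trig_mxP => i j; rewrite !mxE.
by case: (ord3P i) => [->|[->|->]]; case: (ord3P j) => [->|[->|->]].
Qed.

Lemma Dfun_nondeg3 (a : 'rV[C]_6) : Dfun a != 0 -> nondeg3 a.
Proof.
move=> H; have /andP [h0 h1] := Dfun_nondeg2 H; have hd := Dfun_disc H.
rewrite /nondeg3 h0 h1 /=; apply/eqP => k0.
move: hd; rewrite -(E_to_a h0 h1) disc_ctrans Hmat_det0 // expr0n /= mul0r eqxx.
by [].
Qed.

End Final.

Section Main.
Variables (C : numClosedFieldType) (d : nat) (p q : {mpoly C[d * 6]}).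

Definition Yof (v : 'I_(d * 6) -> C) : 'M[C]_(d,6) := vec_mx (\row_k v k).

Lemma mevalY_Yof (r : {mpoly C[d * 6]}) v : mevalY r (Yof v) = r.@[v].
Proof. by rewrite /mevalY /Yof vec_mxK; apply: meval_eq => k; rewrite mxE. Qed.

Definition Erow_mat : 'M[C]_(d,6) := \matrix_(i, k) erow C 0 k.

Lemma S2_erow : S2 (erow C) = 2%:R%:M.
Proof.
apply/matrixP => i j; rewrite !mxE.
by case: (ord3P i) => [->|[->|->]]; case: (ord3P j) => [->|[->|->]]; rewrite /= ?mxE.
Qed.

Lemma Dm_neq0 : (Dm C d) != 0.
Proof.
apply/negP => /eqP D0.
have := DmE (Erow_mat); rewrite D0 /mevalY meval0 => /esym/eqP.
rewrite prodf_seq_eq0 => /hasP [i _ /=].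
have -> : row i Erow_mat = erow C by apply/rowP => k; rewrite !mxE.
rewrite /Dfun /disc S2_erow det_scalar !mxE /= => /eqP h.
have : (32%:R : C) = 0 by rewrite -h; ring.
by move/eqP; rewrite pnatr_eq0.
Qed.


Theorem main_gen : rat_fun_repr p q -> Hyp p q -> exists c, p = c *: q.
Proof.
move=> [qnz _] Hh.
have qD : q * Dm C d != 0 by rewrite mulf_neq0 // Dm_neq0.
have [v0 hv0] : exists v, (q * Dm C d).@[v] != 0.
  have : ~ (forall v, (q * Dm C d).@[v] = 0).
    by move=> /mpoly_zero E; move: qD; rewrite E eqxx.
  move=> /not_all_ex_not [v hv]; exists v; exact/eqP.
set Y0 := Yof v0.
move: hv0; rewrite mevalM -!(mevalY_Yof _ v0) -/Y0 mulf_eq0 negb_or => /andP [hq0 hD0].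
have hDf : forall (Y : 'M[C]_(d,6)), mevalY (Dm C d) Y != 0 -> forall i, Dfun (row i Y) != 0.
  move=> Y; rewrite DmE prodf_seq_neq0 => /allP H i.
  by have := H i (mem_index_enum i).
have hY0 i : nondeg3 (row i Y0) by apply: Dfun_nondeg3; exact: hDf.
have hd0 i : disc (row i Y0) != 0 by apply: Dfun_disc; exact: hDf.
pose Pm := p * (mevalY q Y0)%:MP - q * (mevalY p Y0)%:MP.
have PD : Pm * Dm C d = 0.
  apply: mpoly_zero => v; rewrite mevalM.
  case: (eqVneq ((Dm C d).@[v]) 0) => [->|hD]; first by rewrite mulr0.
  set Yv := Yof v.
  have hYv i : nondeg2 (row i Yv).
    by apply: Dfun_nondeg2; apply: hDf; rewrite mevalY_Yof.
  have R := chain Hh (reach_ops Y0 Yv) hd0 hq0.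
  rewrite reach // /Rel in R.
  rewrite /Pm mevalB !mevalM !mevalC -!(mevalY_Yof _ v) -/Yv.
  by rewrite -R [mevalY p Y0 * _]mulrC subrr mul0r.
move/eqP: PD; rewrite mulf_eq0 (negbTE Dm_neq0) orbF subr_eq0 => /eqP PE.
exists ((mevalY q Y0)^-1 * mevalY p Y0).
have E : mevalY q Y0 *: p = mevalY p Y0 *: q.
  by rewrite -!mul_mpolyC mulrC PE mulrC.
by rewrite -scalerA -E scalerA mulVf // scale1r.
Qed.

End Main.

Unset Implicit Arguments.

Theorem mainTheorem3 (R : realType) (d : nat) (hd : (1 <= d)%N)
    (p q : {mpoly (CC R)[d * 6]}) :
  rat_fun_repr p q ->
  (forall (Ms : 'I_d -> 'M[CC R]_(4,3)) (Bs : 'I_d -> 'M[CC R]_3)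
          (P P' : 'M[CC R]_(3,4)) (Y Y' : 'M[CC R]_(d, 6)),
      (forall i, conic3 (Ms i) (Bs i)) ->
      camera P -> camera P' ->
      (forall i, center_off_plane P (Ms i)) ->
      (forall i, center_off_plane P' (Ms i)) ->
      (forall i, is_image_conic (row i Y) P (Ms i) (Bs i)) ->
      (forall i, is_image_conic (row i Y') P' (Ms i) (Bs i)) ->
      mevalY q Y != 0 -> mevalY q Y' != 0 ->
      mevalY p Y / mevalY q Y = mevalY p Y' / mevalY q Y') ->
  exists c : CC R, p = c *: q.
Proof.
move=> Hr Hh.
exact: (@main_gen (R[i]) d p q Hr Hh).
Qed.
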